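(* Let $k \in \mathbb{N}$, let $G_1, \ldots, G_k$ be ordered graphs, and let $G = G_1 + \ldots + G_k$. Suppose that for each $i \in [k]$ there is an integer $m(i)$ such that $G_i$ has at least two distinct irreducible induced ordered subgraphs on $m(i)$ vertices. Then $S_n(G) \geqslant 2^{n-1}$ for each $n \leqslant k$.
   Context: Ordered graphs of order $n$ have vertex set $[n]$ with the natural order; distinct means non-isomorphic as ordered graphs. A pair of vertices $u<v$ separates the edges of $G$ if every edge $ij$ ($i<j$) has $j\leqslant u$ or $v\leqslant i$; $G$ is irreducible if no pair separates its edges. For ordered graphs $G_1,\dots,G_k$, $G_1+\dots+G_k$ is the ordered graph obtained by placing copies of $G_1,\dots,G_k$ consecutively from left to right with no edges between different copies. $S_n(G)$ is the number of distinct induced ordered subgraphs of $G$ of order $n$. *)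

(* Defs.v *)
From mathcomp Require Import all_boot.
Set Implicit Arguments. Unset Strict Implicit. Unset Printing Implicit Defensive.

(* An ordered graph of order n: vertex set 'I_n = {0,..,n-1} (0-indexed copy of
   [n] with its natural order), edges stored as pairs (i,j) with i < j.
   Since the only order-preserving bijection of 'I_n is the identity, two
   ordered graphs of order n are isomorphic iff they are equal, so
   "distinct" = different edge sets. *)
Definition ograph (n : nat) := {set 'I_n * 'I_n}.

Definition wf_ograph n (G : ograph n) : bool :=
  [forall p in G, (p.1 < p.2)%N].

Definition separates n (G : ograph n) (u v : 'I_n) : bool :=
  [forall p in G, (p.2 <= u)%N || (v <= p.1)%N].

Definition irreducible n (G : ograph n) : bool :=
  ~~ [exists u : 'I_n, exists v : 'I_n, (u < v)%N && separates G u v].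

Definition incr_map m n (f : {ffun 'I_m -> 'I_n}) : bool :=
  [forall i : 'I_m, forall j : 'I_m, (i < j)%N ==> (f i < f j)%N].

Definition induced m n (G : ograph n) (f : {ffun 'I_m -> 'I_n}) : ograph m :=
  [set p : 'I_m * 'I_m | (f p.1, f p.2) \in G].

Definition induced_subgraphs n (G : ograph n) (m : nat) : {set ograph m} :=
  [set induced G f | f in [pred f : {ffun 'I_m -> 'I_n} | incr_map f]].

Definition S m n (G : ograph n) : nat := #|induced_subgraphs G m|.

(* G_1 + ... + G_k: the graph of order \sum_i ns i, the copy of G_i placed on
   the vertices offset i, ..., offset i + ns i - 1. *)
Definition offset k (ns : 'I_k -> nat) (i : 'I_k) : nat :=
  \sum_(j < k | (j < i)%N) ns j.

Definition gsum k (ns : 'I_k -> nat) (Gs : forall i : 'I_k, ograph (ns i))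
  : ograph (\sum_(i < k) ns i) :=
  [set p | [exists i : 'I_k, exists x : 'I_(ns i), exists y : 'I_(ns i),
      [&& (x, y) \in Gs i,
          val p.1 == offset ns i + x &
          val p.2 == offset ns i + y]]].

(* Main.v *)
Require Import Defs.
From mathcomp Require Import all_boot.
From mathcomp Require Import zify.
From Stdlib Require Import Classical ClassicalEpsilon.
Set Implicit Arguments. Unset Strict Implicit. Unset Printing Implicit Defensive.

Definition bP (P : Prop) : bool := if excluded_middle_informative P then true else false.
Lemma bPP P : reflect P (bP P).
Proof. rewrite /bP; case: excluded_middle_informative => h; constructor => //. Qed.

Section Main.
Variables (k : nat) (ns : 'I_k -> nat) (Gs : forall i : 'I_k, ograph (ns i)).
Local Notation NN := (\sum_(i < k) ns i).

Definition off (t : nat) : nat := \sum_(j < k | (j < t)%N) ns j.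

Lemma off_mono t u : t <= u -> off t <= off u.
Proof.
move=> tu; rewrite /off big_mkcond [X in _ <= X]big_mkcond; apply: leq_sum => j _.
by case: ifP => h1; case: ifP => h2 //; lia.
Qed.

Lemma offS (i : 'I_k) : off i.+1 = off i + ns i.
Proof.
rewrite /off (bigD1 i) //= addnC; congr (_ + _); apply: eq_bigl => j.
by rewrite ltnS ltn_neqAle andbC.
Qed.

Lemma offk : off k = NN.
Proof. by apply: eq_bigl => j; rewrite ltn_ord. Qed.

Lemma offS_le (i : 'I_k) : off i.+1 <= NN.
Proof. by rewrite -offk; apply: off_mono. Qed.

Lemma comp_uniq_nat t u x : off t <= x < off t.+1 -> off u <= x < off u.+1 -> t = u.
Proof.
move=> /andP[h1 h2] /andP[h3 h4]; case: (ltngtP t u) => // h.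
- have := off_mono h; lia.
- have := off_mono h; lia.
Qed.

Definition gE (x y : nat) : bool :=
  match (insub x : option 'I_NN), (insub y : option 'I_NN) with
  | Some a, Some b => (a, b) \in gsum Gs
  | _, _ => false end.

Lemma gE_ord (a b : 'I_NN) : gE a b = ((a, b) \in gsum Gs).
Proof. by rewrite /gE !valK. Qed.

Lemma gE_comp x y : gE x y -> exists i : 'I_k,
  off i <= x < off i.+1 /\ off i <= y < off i.+1.
Proof.
rewrite /gE; case: insubP => // a _ ea; case: insubP => // b _ eb.
rewrite inE => /existsP[i /existsP[x' /existsP[y' /and3P[_ /eqP e1 /eqP e2]]]].
exists i; rewrite offS -ea -eb /= e1 e2; change (offset ns i) with (off i).
have := ltn_ord x'; have := ltn_ord y'; lia.
Qed.

Lemma gE_in (i : 'I_k) (a b : 'I_(ns i)) : gE (off i + a) (off i + b) = ((a, b) \in Gs i).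
Proof.
have ha : off i + a < NN by have := offS_le i; rewrite offS; have := ltn_ord a; lia.
have hb : off i + b < NN by have := offS_le i; rewrite offS; have := ltn_ord b; lia.
rewrite /gE (insubT (fun z => z < NN) ha) (insubT (fun z => z < NN) hb) inE /=.
apply/existsP/idP => [[i' /existsP[x' /existsP[y' /and3P[h /eqP e1 /eqP e2]]]]|h].
- have ei : i' = i.
    apply: val_inj => /=; apply: (@comp_uniq_nat _ _ (off i + a)).
    + change (offset ns i') with (off i') in e1.
      rewrite e1 offS; have := ltn_ord x'; lia.
    + rewrite offS; have := ltn_ord a; lia.
  subst i'; change (offset ns i) with (off i) in e1; change (offset ns i) with (off i) in e2.
  have -> : a = x' by apply: val_inj => /=; lia.
  have -> : b = y' by apply: val_inj => /=; lia.
  done.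
- by exists i; apply/existsP; exists a; apply/existsP; exists b; rewrite h /offset /= !eqxx.
Qed.

Lemma cross t x y : off t <= x < off t.+1 -> off t.+1 <= y -> gE x y = false /\ gE y x = false.
Proof.
move=> hx hy; split; apply/negP => /gE_comp [i [h1 h2]].
- have e := comp_uniq_nat hx h1; subst t; lia.
- have e := comp_uniq_nat hx h2; subst t; lia.
Qed.

Variable n : nat.
Local Notation SS := {set 'I_n * 'I_n}.

Definition inP (A : SS) (i j : nat) : bool :=
  match (insub i : option 'I_n), (insub j : option 'I_n) with
  | Some a, Some b => (a, b) \in A | _, _ => false end.

Lemma inPE (A : SS) (p : 'I_n * 'I_n) : inP A p.1 p.2 = (p \in A).
Proof. by case: p => a b; rewrite /inP /= !valK. Qed.

Lemma eq_inP (A B : SS) : (forall i j, inP A i j = inP B i j) -> A = B.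
Proof. move=> h; apply/setP => p; by rewrite -!inPE h. Qed.

Lemma inP_gen (P : nat -> nat -> bool) i j :
  inP [set p : 'I_n * 'I_n | P p.1 p.2] i j = [&& i < n, j < n & P i j].
Proof.
rewrite /inP; case: (insubP 'I_n i) => [a ha ea|ha]; case: (insubP 'I_n j) => [b hb eb|hb];
  rewrite ?inE /= ?ea ?eb ?ha ?hb //; first by rewrite (negbTE hb) andbF.
by rewrite (negbTE ha).
by rewrite (negbTE ha).
Qed.

Lemma inPU (A B : SS) i j : inP (A :|: B) i j = inP A i j || inP B i j.
Proof.
rewrite /inP; case: (insubP 'I_n i) => [a ha ea|ha]; case: (insubP 'I_n j) => [b hb eb|hb] //.
by rewrite inE.
Qed.

Definition pat (s : seq nat) : SS := [set p : 'I_n * 'I_n |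
  [&& p.1 < size s, p.2 < size s & gE (nth 0 s p.1) (nth 0 s p.2)]].
Definition shiftP (l : nat) (Q : SS) : SS := [set p : 'I_n * 'I_n |
  [&& l <= p.1, l <= p.2 & inP Q (p.1 - l) (p.2 - l)]].
Definition phi l (A Q : SS) := A :|: shiftP l Q.

Lemma inP_pat s i j : inP (pat s) i j =
  [&& i < n, j < n & [&& i < size s, j < size s & gE (nth 0 s i) (nth 0 s j)]].
Proof. exact: (inP_gen (fun i j => [&& i < size s, j < size s & gE (nth 0 s i) (nth 0 s j)])). Qed.

Lemma inP_shift l Q i j : inP (shiftP l Q) i j =
  [&& i < n, j < n & [&& l <= i, l <= j & inP Q (i - l) (j - l)]].
Proof. exact: (inP_gen (fun i j => [&& l <= i, l <= j & inP Q (i - l) (j - l)])). Qed.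

Lemma inP_bound A i j : inP A i j -> (i < n) && (j < n).
Proof.
rewrite /inP; case: (insubP 'I_n i) => // a ha _; case: (insubP 'I_n j) => // b hb _ _; by rewrite ha hb.
Qed.

Definition incs (s : seq nat) := forall i j, i < j -> j < size s -> nth 0 s i < nth 0 s j.
Definition inr lo hi (s : seq nat) := forall i, i < size s -> lo <= nth 0 s i < hi.
Definition irrs (s : seq nat) := forall g, g.+1 < size s ->
  exists i j, [/\ i <= g, g < j, j < size s & gE (nth 0 s i) (nth 0 s j)].
Definition irrA l (A : SS) := forall g, g.+1 < l -> exists i j, [/\ i <= g, g < j & inP A i j].
Definition supp l (A : SS) := forall i j, inP A i j -> (i < l) && (j < l).

Definition Real t r : {set SS} :=
  [set A | bP (exists s, [/\ incs s, size s = r, inr (off t) NN s & A = pat s])].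
Definition Block t l : {set SS} :=
  [set A | bP (exists s, [/\ incs s, size s = l, inr (off t) (off t.+1) s, irrs s & A = pat s])].

Lemma supp_pat s : supp (size s) (pat s).
Proof. move=> i j; rewrite inP_pat => /and5P[_ _ -> -> _] //. Qed.

Lemma irrA_pat s : size s <= n -> irrs s -> irrA (size s) (pat s).
Proof.
move=> hn hs g hg; have [i [j [h1 h2 h3 h4]]] := hs g hg.
exists i, j; split => //; rewrite inP_pat h4 h3; apply/and4P; split => //; lia.
Qed.

Lemma cat_real t s s' : t < k -> incs s -> inr (off t) (off t.+1) s ->
  incs s' -> inr (off t.+1) NN s' -> size s + size s' <= n ->
  [/\ incs (s ++ s'), inr (off t) NN (s ++ s') &
      phi (size s) (pat s) (pat s') = pat (s ++ s')].
Proof.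
move=> tk i1 r1 i2 r2 hn.
have oN : off t.+1 <= NN by rewrite -offk; apply: off_mono.
split.
- move=> i j ij; rewrite size_cat => jn; rewrite !nth_cat.
  case: (ltnP i (size s)) => hi; case: (ltnP j (size s)) => hj.
  + exact: i1.
  + have := r1 i hi; have := r2 (j - size s); lia.
  + lia.
  + apply: i2; lia.
- move=> i; rewrite size_cat nth_cat => hi; case: ltnP => h.
  + have := r1 i h; lia.
  + have := r2 (i - size s); have := off_mono (leqnSn t); lia.
- apply: eq_inP => i j; rewrite inPU inP_shift !inP_pat size_cat !nth_cat.
  case: (ltnP i (size s)) => hi; case: (ltnP j (size s)) => hj.
  + have -> : i < size s + size s' by lia.
    have -> : j < size s + size s' by lia.
    by rewrite /= !andbF orbF.
  + case: (ltnP j (size s + size s')) => hj2; last by rewrite /= !andbF.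
    have [-> _] := cross (r1 i hi) (proj1 (andP (r2 (j - size s) ltac:(lia)))).
    by rewrite /= !andbF.
  + case: (ltnP i (size s + size s')) => hi2; last by rewrite /= !andbF.
    have [_ ->] := cross (r1 j hj) (proj1 (andP (r2 (i - size s) ltac:(lia)))).
    by rewrite /= !andbF.
  + rewrite /= !andbF /=.
    apply/idP/idP => [/and5P[-> -> _ _ /and3P[h1 h2 ->]]|/and5P[h1 h2 h3 h4 ->]].
    * rewrite andbT; apply/andP; split; lia.
    * rewrite h1 h2 /=; apply/and4P; split; lia.
Qed.

Lemma phi_cross l A Q i j : supp l A -> i < l -> l <= j -> inP (phi l A Q) i j = false.
Proof.
move=> sA hi hj; rewrite inPU inP_shift.
have -> : inP A i j = false by apply/negP => /sA; lia.
have -> : l <= i = false by lia.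
by rewrite /= !andbF.
Qed.

Lemma phi_A l A Q i j : supp l A ->
  inP A i j = [&& i < l, j < l & inP (phi l A Q) i j].
Proof.
move=> sA; rewrite inPU inP_shift.
case: (boolP (inP A i j)) => h; first by have := sA _ _ h; case/andP => -> ->.
case: (ltnP i l) => hi //=; case: (ltnP j l) => hj //=.
by rewrite /= !andbF.
Qed.

Lemma phi_Q r l A Q i j : supp l A -> supp (r - l) Q -> r <= n ->
  inP Q i j = inP (phi l A Q) (i + l) (j + l).
Proof.
move=> sA sQ rn; rewrite inPU inP_shift.
have -> : inP A (i + l) (j + l) = false by apply/negP => /sA; lia.
rewrite !addnK leq_addl /=.
case: (boolP (inP Q i j)) => h; last by rewrite !andbF.
have /andP[h1 h2] := sQ _ _ h; rewrite !andbT; apply/esym/andP; split; lia.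
Qed.

Lemma phi_inj r l1 l2 A1 A2 Q1 Q2 : 0 < l1 -> 0 < l2 ->
  irrA l1 A1 -> irrA l2 A2 -> supp l1 A1 -> supp l2 A2 ->
  supp (r - l1) Q1 -> supp (r - l2) Q2 -> r <= n ->
  phi l1 A1 Q1 = phi l2 A2 Q2 -> [/\ l1 = l2, A1 = A2 & Q1 = Q2].
Proof.
move=> p1 p2 ir1 ir2 s1 s2 q1 q2 rn e.
have el : l1 = l2.
  case: (ltngtP l1 l2) => // h.
  - have [i [j [h1 h2 h3]]] := ir2 l1.-1 ltac:(lia).
    have := phi_cross Q1 s1 (i := i) (j := j) ltac:(lia) ltac:(lia).
    by rewrite e inPU h3.
  - have [i [j [h1 h2 h3]]] := ir1 l2.-1 ltac:(lia).
    have := phi_cross Q2 s2 (i := i) (j := j) ltac:(lia) ltac:(lia).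
    by rewrite -e inPU h3.
subst l2; split => //.
- by apply: eq_inP => i j; rewrite (phi_A Q1 i j s1) (phi_A Q2 i j s2) e.
- by apply: eq_inP => i j; rewrite (phi_Q i j s1 q1 rn) (phi_Q i j s2 q2 rn) e.
Qed.

Lemma irrs_remove x y z : irrs [:: x, y & z] -> irrs (y :: z) \/ irrs (x :: z).
Proof.
move=> h.
case: (classic (irrs (y :: z))) => [|hn]; [by left|right].
have [g0 hg0] := not_all_ex_not _ _ hn.
have [hg1 hno] := imply_to_and _ _ hg0.
simpl in hg1.
have [i0 [j0 [a1 a2 a3 a4]]] := h g0.+1 ltac:(simpl; lia).
have i00 : i0 = 0.
  case: i0 a1 a4 => // i0' a1 a4; exfalso; apply: hno; exists i0', j0.-1.
  case: j0 a2 a3 a4 => // j0' a2 a3 a4 /=; split => //=; simpl in a3; lia.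
subst i0; simpl in a3.
move=> g; rewrite /= => hg.
case: g hg => [|g] hg.
- exists 0, j0.-1; case: j0 a2 a3 a4 => [|[|j0]] //= a2 a3 a4; split => //; lia.
- have [i [j [b1 b2 b3 b4]]] := h g.+2 ltac:(simpl; lia).
  simpl in b3.
  case: i b1 b4 => [|[|i]] b1 b4.
  + exists 0, j.-1; case: j b2 b3 b4 => [|[|j]] //= b2 b3 b4; split => //; lia.
  + have hj : j <= g0.+1.
      case: (leqP j g0.+1) => // hj; exfalso; apply: hno; exists 0, j.-1.
      case: j b2 b3 b4 hj => [|j] //= b2 b3 b4 hj; split => //=; lia.
    exists 0, j0.-1; case: j0 a2 a3 a4 => [|[|j0]] //= a2 a3 a4; split => //; lia.
  + exists i.+1, j.-1; case: j b2 b3 b4 => [|[|j]] //= b2 b3 b4; split => //; lia.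
Qed.

Lemma shrink lo hi : forall d s l, size s = l + d -> 0 < l -> incs s -> inr lo hi s -> irrs s ->
  exists s', [/\ size s' = l, incs s', inr lo hi s' & irrs s'].
Proof.
elim => [|d IH] s l hs l0 hinc hr hir; first by exists s; split => //; lia.
case: s hs hinc hr hir => [|x [|y z]] //= hs hinc hr hir; try lia.
have [h|h] := irrs_remove hir.
- apply: (IH (y :: z) l) => //=; first lia.
  + by move=> i j ij jn; apply: (hinc i.+1 j.+1).
  + by move=> i hi'; apply: (hr i.+1).
- apply: (IH (x :: z) l) => //=; first lia.
  + move=> [|i] [|j] //= ij jn; [apply: (hinc 0 j.+2) | apply: (hinc i.+2 j.+2)] => //=; lia.
  + move=> [|i] /= hi'; [apply: (hr 0) | apply: (hr i.+2)] => //=; lia.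
Qed.

Lemma block_of_induced (t : 'I_k) m (H : ograph m) : H \in induced_subgraphs (Gs t) m ->
  exists s, [/\ size s = m, incs s, inr (off t) (off t.+1) s &
     forall a b : 'I_m, gE (nth 0 s a) (nth 0 s b) = ((a, b) \in H)].
Proof.
case/imsetP => f hf ->.
pose F i := if (insub i : option 'I_m) is Some a then off t + f a else 0.
exists (mkseq F m).
have hF : forall i (hi : i < m), nth 0 (mkseq F m) i = off t + f (Ordinal hi).
  by move=> i hi; rewrite nth_mkseq // /F (insubT (fun z => z < m) hi).
split.
- by rewrite size_mkseq.
- move=> i j ij; rewrite size_mkseq => jm.
  have im : i < m by lia.
  rewrite (hF _ im) (hF _ jm) ltn_add2l.
  rewrite inE in hf; move/forallP: hf => /(_ (Ordinal im)) /forallP /(_ (Ordinal jm)) /implyP.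
  by apply.
- move=> i; rewrite size_mkseq => im; rewrite (hF _ im) offS leq_addr ltn_add2l /=.
  exact: ltn_ord.
- move=> a b; rewrite (hF _ (ltn_ord a)) (hF _ (ltn_ord b)) gE_in inE /=.
  have -> : Ordinal (ltn_ord a) = a by apply: val_inj.
  have -> : Ordinal (ltn_ord b) = b by apply: val_inj.
  done.
Qed.

Lemma irr_irrs m (H : ograph m) s : size s = m ->
  (forall a b : 'I_m, gE (nth 0 s a) (nth 0 s b) = ((a, b) \in H)) ->
  irreducible H -> irrs s.
Proof.
move=> hs hE hirr g hg.
have hg1 : g < m by lia.
have hg2 : g.+1 < m by lia.
case: (boolP [exists p, (p \in H) && ~~ ((p.2 <= g) || (g.+1 <= p.1))]).
- case/existsP => -[a b] /andP[hp hn]; rewrite negb_or -!ltnNge /= in hn.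
  case/andP: hn => h1 h2.
  exists a, b; split => //; [by rewrite hs | by rewrite hE].
- move=> hne; exfalso; move/negP: hirr; apply; apply/existsP; exists (Ordinal hg1).
  apply/existsP; exists (Ordinal hg2); rewrite /= ltnSn /=.
  apply/forallP => p; apply/implyP => pin; apply/negPn/negP => hq.
  by move/negP: hne; apply; apply/existsP; exists p; rewrite pin hq.
Qed.

Lemma real0 t : pat [::] \in Real t 0.
Proof. rewrite inE; apply/bPP; exists [::]; split => //. Qed.

Lemma real_supp t r Q : Q \in Real t r -> supp r Q.
Proof. rewrite inE => /bPP [s [_ hs _ ->]]; rewrite -hs; exact: supp_pat. Qed.

Lemma block_props t l A : l <= n -> A \in Block t l -> irrA l A /\ supp l A.
Proof.
rewrite inE => hl /bPP [s [_ hs _ hir ->]]; subst l; split; [exact: irrA_pat | exact: supp_pat].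
Qed.

Lemma block_card (t : 'I_k) m (H1 H2 : ograph m) : H1 != H2 ->
  H1 \in induced_subgraphs (Gs t) m -> H2 \in induced_subgraphs (Gs t) m ->
  irreducible H1 -> irreducible H2 ->
  0 < m /\ forall l, 0 < l -> l <= n -> l <= m -> (l <= m) + (l == m) <= #|Block t l|.
Proof.
move=> hne h1 h2 i1 i2.
have [s1 [hs1 inc1 r1 e1]] := block_of_induced h1.
have [s2 [hs2 inc2 r2 e2]] := block_of_induced h2.
have ir1 := irr_irrs hs1 e1 i1.
have ir2 := irr_irrs hs2 e2 i2.
have m0 : 0 < m.
  rewrite lt0n; apply/eqP => m0'; move/negP: hne; apply; apply/eqP/setP => -[a b].
  by have := ltn_ord a; lia.
split => // l l0 ln lm.
case: (ltngtP l m) lm => // hl _.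
- have [s' [hs' inc' r' ir']] := shrink (d := m - l) (s := s1) (l := l) ltac:(lia) l0 inc1 r1 ir1.
  rewrite /=.
  by apply/card_gt0P; exists (pat s'); rewrite inE; apply/bPP; exists s'.
- subst l; change (2 <= #|Block t m|).
  have hneq : pat s1 != pat s2.
    apply: contra hne => /eqP e; apply/eqP/setP => -[a b].
    have an : a < n by have := ltn_ord a; lia.
    have bn : b < n by have := ltn_ord b; lia.
    have := congr1 (fun A => inP A a b) e; rewrite !inP_pat hs1 hs2 an bn !ltn_ord /=.
    by rewrite e1 e2.
  have := cards2 (pat s1) (pat s2); rewrite hneq => <-.
  apply: subset_leq_card; apply/subsetP => x; rewrite !inE => /orP[/eqP->|/eqP->];
    apply/bPP; [exists s1 | exists s2]; split => //.
Qed.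

Definition w m l := (l <= m) + (l == m).
Definition Tn m r := \sum_(j < r) w m j.+1 * 2 ^ (r - j.+1).

Lemma T_rec m r : Tn m r.+1 = 2 * Tn m r + w m r.+1.
Proof.
rewrite /Tn big_ord_recr /= subnn expn0 muln1; congr (_ + _).
rewrite big_distrr /=; apply: eq_bigr => j _.
have -> : r.+1 - j.+1 = (r - j.+1).+1 by have := ltn_ord j; lia.
by rewrite expnS mulnCA.
Qed.

Lemma T_low m r : 0 < m -> 2 ^ r <= Tn m r + (r < m).
Proof.
move=> m0; elim: r => [|r IH]; first by rewrite /Tn big_ord0 m0.
rewrite T_rec expnS /w.
move: IH; set X := 2 ^ r; set Y := Tn m r.
case: (ltngtP r.+1 m) => h /= IH.
- lia.
- lia.
- lia.
Qed.

Lemma M_low m r : 0 < m -> 0 < r ->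
  2 ^ (r - 1) <= \sum_(j < r) w m j.+1 * 2 ^ ((r - j.+1) - 1).
Proof.
move=> m0; case: r => // r _.
rewrite big_ord_recr /= subnn /= muln1.
have -> : \sum_(i < r) w m i.+1 * 2 ^ (r.+1 - i.+1 - 1) = Tn m r.
  by apply: eq_bigr => j _; have -> : r.+1 - j.+1 - 1 = r - j.+1 by lia.
have := T_low r m0; rewrite subn1 /= /w.
case: (ltngtP r.+1 m) => h /= IH; lia.
Qed.

Lemma count_union t r : r <= n -> forall L, L <= r ->
  #|\bigcup_(j < L) [set phi j.+1 p.1 p.2 | p in setX (Block t j.+1) (Real t.+1 (r - j.+1))]|
  = \sum_(j < L) #|Block t j.+1| * #|Real t.+1 (r - j.+1)|.
Proof.
move=> rn; elim => [|L IH] hL; first by rewrite !big_ord0 cards0.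
have key : forall l1 l2 p q, 0 < l1 <= r -> 0 < l2 <= r ->
    p \in setX (Block t l1) (Real t.+1 (r - l1)) ->
    q \in setX (Block t l2) (Real t.+1 (r - l2)) ->
    phi l1 p.1 p.2 = phi l2 q.1 q.2 -> l1 = l2 /\ p = q.
  move=> l1 l2 [A1 Q1] [A2 Q2] /andP[a1 b1] /andP[a2 b2].
  rewrite !in_setX /= => /andP[hA1 hQ1] /andP[hA2 hQ2] e.
  have [i1 s1] := block_props (ltac:(lia) : l1 <= n) hA1.
  have [i2 s2] := block_props (ltac:(lia) : l2 <= n) hA2.
  have [-> -> ->] := phi_inj a1 a2 i1 i2 s1 s2 (real_supp hQ1) (real_supp hQ2) rn e.
  by [].
rewrite big_ord_recr /= big_ord_recr /= -IH; last by lia.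
set U := \bigcup_(j < L) _.
set I := [set _ | _ in _].
have /eqP -> : #|U :|: I| == #|U| + #|I|.
  rewrite (leq_card_setU U I).2 -setI_eq0; apply/eqP/setP => P; rewrite in_setI in_set0; apply/negP => /andP[].
  case/bigcupP => j _ /imsetP[p hp ->] /imsetP[q hq e].
  have [e1 _] := key j.+1 L.+1 p q ltac:(have := ltn_ord j; lia) ltac:(lia) hp hq e.
  have := ltn_ord j; lia.
congr (_ + _); rewrite card_in_imset ?cardsX //.
move=> p q hp hq e; exact: (key L.+1 L.+1 p q ltac:(lia) ltac:(lia) hp hq e).2.
Qed.

Hypothesis Hirr : forall i : 'I_k, exists m : nat, exists H1 H2 : ograph m,
      [/\ H1 != H2, H1 \in induced_subgraphs (Gs i) m,
          H2 \in induced_subgraphs (Gs i) m,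
          irreducible H1 & irreducible H2].

Lemma main_ind : forall d t, t + d = k -> forall r, r <= d -> r <= n ->
  2 ^ (r - 1) <= #|Real t r|.
Proof.
elim => [|d IH] t htd r hrd hrn.
  have -> : r = 0 by lia.
  by apply/card_gt0P; exists (pat [::]); exact: real0.
case: r hrd hrn => [|r] hrd hrn.
  by apply/card_gt0P; exists (pat [::]); exact: real0.
have tk : t < k by lia.
have [m [H1 [H2 [hne h1 h2 i1 i2]]]] := Hirr (Ordinal tk).
have [m0 hB] := block_card hne h1 h2 i1 i2.
have sub : \bigcup_(j < r.+1) [set phi j.+1 p.1 p.2 | p in setX (Block t j.+1) (Real t.+1 (r.+1 - j.+1))]
    \subset Real t r.+1.
  apply/subsetP => P /bigcupP[j _ /imsetP[[A Q]]].
  rewrite in_setX /= => /andP[hA hQ] ->.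
  move: hA hQ; rewrite !inE => /bPP[s [inc1 hs r1 ir1 ->]] /bPP[s' [inc2 hs' r2 ->]].
  have [inc r' e] := cat_real tk inc1 r1 inc2 r2 ltac:(have := ltn_ord j; lia).
  rewrite -hs e; apply/bPP; exists (s ++ s'); split => //.
  rewrite size_cat hs hs'; have := ltn_ord j; lia.
apply: leq_trans (subset_leq_card sub); rewrite count_union //.
apply: leq_trans (M_low m0 (ltn0Sn r)) _; apply: leq_sum => j _.
apply: leq_mul.
- case: (leqP j.+1 m) => hj.
  + exact: (hB j.+1 (ltn0Sn j) ltac:(have := ltn_ord j; lia) hj).
  + rewrite /w; have -> : (j.+1 <= m) = false by lia. have -> : (j.+1 == m) = false by apply/eqP; lia. by [].
- apply: IH; try lia.
Qed.
End Main.

Theorem lemma17 (k : nat) (ns : 'I_k -> nat)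
  (Gs : forall i : 'I_k, ograph (ns i))
  (Hwf : forall i : 'I_k, wf_ograph (Gs i))
  (Hirr : forall i : 'I_k, exists m : nat, exists H1 H2 : ograph m,
      [/\ H1 != H2, H1 \in induced_subgraphs (Gs i) m,
          H2 \in induced_subgraphs (Gs i) m,
          irreducible H1 & irreducible H2]) :
  forall n : nat, (n <= k)%N -> (2 ^ (n - 1) <= S n (gsum Gs))%N.
Proof.
move=> n nk.
have h := @main_ind k ns Gs n Hirr k 0 (erefl k) n nk (leqnn n).
apply: leq_trans h _; apply: subset_leq_card; apply/subsetP => A.
rewrite inE => /bPP [s [hinc hs hr ->]].
have hlt : forall i : 'I_n, nth 0 s i < \sum_(i < k) ns i.
  by move=> i; have := hr i ltac:(rewrite hs; exact: ltn_ord); case/andP.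
pose f := [ffun i => Ordinal (hlt i)] : {ffun 'I_n -> 'I_(\sum_(i < k) ns i)}.
apply/imsetP; exists f.
- rewrite inE; apply/forallP => i; apply/forallP => j; apply/implyP => ij; rewrite !ffunE /=.
  by apply: hinc => //; rewrite hs.
- apply/setP => -[a b].
  have ea : nth 0 s a = f a by rewrite ffunE.
  have eb : nth 0 s b = f b by rewrite ffunE.
  rewrite /induced /pat [(a, b) \in [set _ | _]]in_set [(a, b) \in [set _ | _]]in_set /= hs !ltn_ord /=.
  by rewrite ea eb gE_ord.
Qed.
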